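(* Let $f_0,f_1\in \mathrm{PL}_0(\mathbf{I})$ satisfy $[f_1^{f_0},f_0f_1^{-1}]=1$ and $[f_0f_1^{-1},f_1^{f_0^2}]=1$. If $A$ is an orbital of both $f_0$ and $f_1$, then $f_0$ and $f_1$ commute on $A$, i.e. $(f_0f_1)|_A=(f_1f_0)|_A$.
   Context: $\mathrm{PL}_0(\mathbf{I})$ is the group of orientation-preserving piecewise-linear homeomorphisms of $[0,1]$ with finitely many points of non-differentiability. Functions act on the right: $tf=f(t)$, $fg=g\circ f$, $a^b=b^{-1}ab$, $[a,b]=aba^{-1}b^{-1}$. The orbitals of $f$ are the connected components (open intervals) of $\operatorname{Supp}(f)=\{x: xf\ne x\}$. *)

(* Defs.v *)
From Stdlib Require Import Reals.
Open Scope R_scope.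

(* Elements of PL_0(I), represented by their action on [0,1] (values of the
   function outside [0,1] are irrelevant). *)
Definition inI (t : R) : Prop := 0 <= t <= 1.

Definition PL0 (f : R -> R) : Prop :=
  f 0 = 0 /\ f 1 = 1 /\
  (forall x y, 0 <= x -> x < y -> y <= 1 -> f x < f y) /\
  exists (n : nat) (x : nat -> R),
    x O = 0 /\ x n = 1 /\
    (forall i, (i < n)%nat -> x i < x (S i)) /\
    (forall i, (i < n)%nat -> exists m c : R,
        forall t, x i <= t <= x (S i) -> f t = m * t + c).

Definition inverse_on_I (f g : R -> R) : Prop :=
  forall t, inI t -> g (f t) = t /\ f (g t) = t.

(* Right actions: t (f g) = g (f t). *)
Definition rmul (f g : R -> R) : R -> R := fun t => g (f t).

Definition eqI (f g : R -> R) : Prop := forall t, inI t -> f t = g t.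

(* a^b = b^{-1} a b, given binv = b^{-1} *)
Definition conjg (a b binv : R -> R) : R -> R := rmul (rmul binv a) b.

Definition commg (a b ainv binv : R -> R) : R -> R :=
  rmul (rmul (rmul a b) ainv) binv.

Definition Supp (f : R -> R) (x : R) : Prop := inI x /\ f x <> x.

(* connected subsets of R are exactly the convex ones (intervals) *)
Definition convex (A : R -> Prop) : Prop :=
  forall x y z, A x -> A y -> x <= z <= y -> A z.

(* an orbital of f: a connected component of Supp(f) *)
Definition orbital (f : R -> R) (A : R -> Prop) : Prop :=
  (exists x, A x) /\ convex A /\ (forall x, A x -> Supp f x) /\
  (forall B : R -> Prop, convex B -> (forall x, B x -> Supp f x) ->
     (forall x, A x -> B x) -> forall x, B x -> A x).

(* Main.v *)
Require Import Defs.
From Stdlib Require Import Reals Lra Lia Classical.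
Open Scope R_scope.

Lemma search (y : nat -> R) (n : nat) (t : R) :
  y O <= t -> t < y n -> exists i, (i < n)%nat /\ y i <= t < y (S i).
Proof.
  intros H0 Hn.
  assert (forall k, t < y k -> exists i, (i < k)%nat /\ y i <= t < y (S i)).
  { induction k as [|k IH]; intros Hk.
    - lra.
    - destruct (Rle_lt_dec (y k) t) as [Hle|Hlt].
      + exists k; split; [lia|lra].
      + destruct (IH Hlt) as [i [Hi1 Hi2]]. exists i; split; [lia|exact Hi2]. }
  auto.
Qed.

Lemma seq_mono (x : nat -> R) (n : nat) :
  (forall i, (i < n)%nat -> x i < x (S i)) ->
  forall d j, (j + d <= n)%nat -> x j <= x (j + d)%nat.
Proof.
  intros Hx d. induction d as [|d IH]; intros j Hj.
  - rewrite Nat.add_0_r; lra.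
  - replace (j + S d)%nat with (S (j + d)) by lia.
    assert (x (j+d)%nat < x (S (j+d))) by (apply Hx; lia).
    specialize (IH j ltac:(lia)). lra.
Qed.

Lemma PL_piece f : PL0 f -> forall t, 0 <= t < 1 ->
  exists a b m c, a <= t < b /\ 0 <= a /\ b <= 1 /\
    (forall s, a <= s <= b -> f s = m*s + c).
Proof.
  intros [H0 [H1 [Hm [n [x [Hx0 [Hxn [Hxi Hpc]]]]]]]] t Ht.
  destruct (search x n t) as [i [Hi Hti]]; try lra.
  destruct (Hpc i Hi) as [m [c Hmc]].
  pose proof (seq_mono x n Hxi) as HM.
  assert (0 <= x i). { rewrite <- Hx0. apply (HM i 0%nat); lia. }
  assert (x (S i) <= 1).
  { pose proof (HM (n - S i)%nat (S i) ltac:(lia)) as K.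
    replace (S i + (n - S i))%nat with n in K by lia. lra. }
  exists (x i), (x (S i)), m, c. repeat split; try lra. exact Hmc.
Qed.

Definition incI (F : R -> R) := forall x y, inI x -> inI y -> x < y -> F x < F y.

Lemma PL_inc f : PL0 f -> incI f.
Proof. intros [_ [_ [Hm _]]] x y Hx Hy Hxy; unfold inI in *; apply Hm; lra. Qed.

Lemma incI_le F x y : incI F -> inI x -> inI y -> x <= y -> F x <= F y.
Proof. intros HF Hx Hy Hxy. destruct (Rle_lt_or_eq_dec x y Hxy) as [H|H]. left; auto. subst; lra. Qed.

Lemma incI_inj F x y : incI F -> inI x -> inI y -> F x = F y -> x = y.
Proof. intros HF Hx Hy H. destruct (Rtotal_order x y) as [h|[h|h]]; auto.
  - specialize (HF x y Hx Hy h); lra.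
  - specialize (HF y x Hy Hx h); lra. Qed.

Lemma PL_mapI f : PL0 f -> forall t, inI t -> inI (f t).
Proof.
  intros HP t Ht. pose proof (PL_inc f HP) as Hi. destruct HP as [H0 [H1 _]].
  assert (I0 : inI 0) by (unfold inI; lra). assert (I1 : inI 1) by (unfold inI; lra).
  pose proof (incI_le f 0 t Hi I0 Ht (proj1 Ht)).
  pose proof (incI_le f t 1 Hi Ht I1 (proj2 Ht)).
  unfold inI; lra.
Qed.

Lemma PL_surj f : PL0 f -> forall t, inI t -> exists u, inI u /\ f u = t.
Proof.
  intros HP t Ht. pose proof (PL_inc f HP) as Hinc.
  destruct HP as [H0 [H1 [Hm [n [x [Hx0 [Hxn [Hxi Hpc]]]]]]]].
  destruct (Req_dec t 1) as [->|Ht1].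
  { exists 1; split; [unfold inI; lra|exact H1]. }
  destruct (search (fun k => f (x k)) n t) as [i [Hi Hti]]; simpl.
  { rewrite Hx0, H0. unfold inI in Ht; lra. }
  { rewrite Hxn, H1. unfold inI in Ht; lra. }
  destruct (Hpc i Hi) as [m [c Hmc]].
  pose proof (Hxi i Hi) as Hlt.
  rewrite (Hmc (x i)) in Hti by lra. rewrite (Hmc (x (S i))) in Hti by lra.
  assert (Hmp : 0 < m) by nra.
  set (u := (t - c) / m).
  assert (Hu : m * u = t - c) by (unfold u; field; lra).
  assert (x i <= u) by nra. assert (u < x (S i)) by nra.
  pose proof (seq_mono x n Hxi) as HM.
  assert (0 <= x i). { rewrite <- Hx0. apply (HM i 0%nat); lia. }
  assert (x (S i) <= 1).
  { pose proof (HM (n - S i)%nat (S i) ltac:(lia)) as K.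
    replace (S i + (n - S i))%nat with n in K by lia. lra. }
  exists u. split. unfold inI; lra. rewrite Hmc by lra. lra.
Qed.

Lemma inv_mapI f g : PL0 f -> inverse_on_I f g -> forall t, inI t -> inI (g t).
Proof.
  intros HP Hg t Ht. destruct (PL_surj f HP t Ht) as [u [Hu <-]].
  rewrite (proj1 (Hg u Hu)). exact Hu.
Qed.

Lemma inv_inc f g : PL0 f -> inverse_on_I f g -> incI g.
Proof.
  intros HP Hg x y Hx Hy Hxy.
  pose proof (inv_mapI f g HP Hg x Hx). pose proof (inv_mapI f g HP Hg y Hy).
  apply Rnot_le_lt; intros Hle.
  pose proof (incI_le f _ _ (PL_inc f HP) H0 H Hle).
  rewrite (proj2 (Hg x Hx)), (proj2 (Hg y Hy)) in H1. lra.
Qed.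

Lemma inc_comp F G : incI F -> incI G -> (forall t, inI t -> inI (F t)) ->
  incI (fun x => G (F x)).
Proof. intros HF HG HI x y Hx Hy Hxy; simpl; apply HG; auto. Qed.

Definition germ (p : R) (f : R -> R) (m : R) : Prop :=
  0 < m /\ exists d, 0 < d /\ p + d <= 1 /\
    forall s, p <= s <= p + d -> f s = p + m * (s - p).

Lemma PL_germ f p : PL0 f -> 0 <= p < 1 -> f p = p -> exists m, germ p f m.
Proof.
  intros HP Hp Hfp. pose proof (PL_inc f HP) as Hinc.
  destruct (PL_piece f HP p Hp) as [a [b [m [c [Hab [Ha [Hb Hmc]]]]]]].
  assert (Hfb : f p < f b) by (apply Hinc; unfold inI; lra).
  rewrite (Hmc p) in Hfp, Hfb by lra. rewrite (Hmc b) in Hfb by lra.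
  exists m. split. nra.
  exists (b - p). repeat split; try lra. intros s Hs. rewrite Hmc by lra. lra.
Qed.

Lemma germ_comp p f g m k : germ p f m -> germ p g k -> germ p (fun s => g (f s)) (m * k).
Proof.
  intros [Hm [df [Hdf [Hdf1 Hf]]]] [Hk [dg [Hdg [Hdg1 Hg]]]].
  split. nra.
  exists (Rmin df (dg / m)). split; [apply Rmin_glb_lt; [lra| apply Rdiv_lt_0_compat; lra]|].
  pose proof (Rmin_l df (dg/m)). pose proof (Rmin_r df (dg/m)).
  split. lra. intros s Hs. rewrite Hf by lra.
  assert (m * (s - p) <= dg).
  { assert (K : s - p <= dg / m) by lra.
    apply Rmult_le_compat_l with (r := m) in K; [|lra].
    replace (m * (dg / m)) with dg in K by (field; lra). exact K. }
  rewrite Hg by nra. ring.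
Qed.

Lemma germ_inv p f g m : germ p f m -> inverse_on_I f g -> 0 <= p -> germ p g (/ m).
Proof.
  intros [Hm [df [Hdf [Hdf1 Hf]]]] Hinv Hp.
  split. apply Rinv_0_lt_compat; lra.
  exists (Rmin (m * df) df). split; [apply Rmin_glb_lt; nra|].
  pose proof (Rmin_l (m*df) df). pose proof (Rmin_r (m*df) df).
  split. lra. intros u Hu.
  set (v := p + (u - p) / m).
  assert (Hv1 : (u - p) / m <= df).
  { apply Rmult_le_reg_l with m; [lra|]. replace (m * ((u - p) / m)) with (u - p) by (field; lra). lra. }
  assert (Hv0 : 0 <= (u - p) / m) by (unfold Rdiv; apply Rmult_le_pos; [lra| left; apply Rinv_0_lt_compat; lra]).
  assert (Hfv : f v = u). { unfold v. rewrite Hf by lra. field; lra. }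
  rewrite <- Hfv at 1. rewrite (proj1 (Hinv v ltac:(unfold inI, v; lra))).
  unfold v. field; lra.
Qed.

Lemma germ_eq p f g m k : germ p f m -> germ p g k -> m = k ->
  exists d, 0 < d /\ forall s, p <= s <= p + d -> f s = g s.
Proof.
  intros [_ [df [Hdf [_ Hf]]]] [_ [dg [Hdg [_ Hg]]]] <-.
  exists (Rmin df dg). split. apply Rmin_glb_lt; lra.
  pose proof (Rmin_l df dg). pose proof (Rmin_r df dg).
  intros s Hs. rewrite Hf, Hg by lra. reflexivity.
Qed.

Lemma glb_ex (S : R -> Prop) : (exists x, S x) -> (exists b, forall x, S x -> b <= x) ->
  exists L, (forall x, S x -> L <= x) /\ (forall y, L < y -> exists x, S x /\ x < y).
Proof.
  intros [x0 Hx0] [b Hb].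
  destruct (completeness (fun z => S (- z))) as [M [HM1 HM2]].
  - exists (-b). intros z Hz. specialize (Hb _ Hz). lra.
  - exists (-x0). rewrite Ropp_involutive. exact Hx0.
  - exists (-M). split.
    + intros x Hx. assert (K : S (- - x)) by (rewrite Ropp_involutive; exact Hx).
      specialize (HM1 _ K). lra.
    + intros y Hy. apply NNPP. intros Hn.
      assert (Hub : is_upper_bound (fun z => S (- z)) (- y)).
      { intros z Hz. apply Rnot_lt_le. intros Hlt. apply Hn. exists (- z). split; [exact Hz|lra]. }
      specialize (HM2 _ Hub). lra.
Qed.

Lemma extend f A : orbital f A -> forall t lo hi, A t -> lo <= t <= hi ->
  (forall y, lo <= y <= hi -> Supp f y) -> forall y, lo <= y <= hi -> A y.
Proof.
  intros [_ [Hc [HS Hmax]]] t lo hi Ht Hlt Hint y Hy.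
  apply (Hmax (fun z => A z \/ lo <= z <= hi)).
  - intros x z w Hx Hz Hw.
    destruct Hx as [Hx|Hx]; destruct Hz as [Hz|Hz].
    + left; exact (Hc x z w Hx Hz Hw).
    + destruct (Rle_lt_dec lo w). right; lra. left; apply (Hc x t w Hx Ht); lra.
    + destruct (Rle_lt_dec w hi). right; lra. left; apply (Hc t z w Ht Hz); lra.
    + right; lra.
  - intros x [Hx|Hx]; [apply HS; exact Hx | apply Hint; exact Hx].
  - intros x Hx; left; exact Hx.
  - right; exact Hy.
Qed.

Lemma orbit_inv f g A : orbital f A -> incI f -> (forall t, inI t -> inI (f t)) ->
  inverse_on_I f g -> (forall t, inI t -> inI (g t)) ->
  forall t, A t -> A (f t) /\ A (g t).
Proof.
  intros HO Hi HfI Hinv HgI t Ht.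
  pose proof HO as [_ [_ [HS _]]].
  destruct (HS t Ht) as [HtI Hft].
  pose proof (HfI t HtI) as HftI. pose proof (HgI t HtI) as HgtI.
  destruct (Hinv t HtI) as [_ Hfg].
  assert (Hgt : g t <> t). { intros E. rewrite E in Hfg. auto. }
  unfold inI in *.
  split.
  - destruct (Rtotal_order (f t) t) as [h|[h|h]]; [|contradiction|].
    + apply (extend f A HO t (f t) t Ht ltac:(lra)); [|lra].
      intros y Hy. split. unfold inI; lra.
      destruct (Req_dec y t) as [->|Hne]; [exact Hft|].
      assert (f y < f t) by (apply Hi; unfold inI; lra). lra.
    + apply (extend f A HO t t (f t) Ht ltac:(lra)); [|lra].
      intros y Hy. split. unfold inI; lra.
      destruct (Req_dec y t) as [->|Hne]; [exact Hft|].
      assert (f t < f y) by (apply Hi; unfold inI; lra). lra.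
  - destruct (Rtotal_order (g t) t) as [h|[h|h]]; [|contradiction|].
    + apply (extend f A HO t (g t) t Ht ltac:(lra)); [|lra].
      intros y Hy. split. unfold inI; lra.
      destruct (Req_dec y t) as [->|Hne]; [exact Hft|].
      destruct (Req_dec y (g t)) as [->|Hne2]; [lra|].
      assert (f (g t) < f y) by (apply Hi; unfold inI; lra). lra.
    + apply (extend f A HO t t (g t) Ht ltac:(lra)); [|lra].
      intros y Hy. split. unfold inI; lra.
      destruct (Req_dec y t) as [->|Hne]; [exact Hft|].
      destruct (Req_dec y (g t)) as [->|Hne2]; [lra|].
      assert (f y < f (g t)) by (apply Hi; unfold inI; lra). lra.
Qed.

Lemma endpoint f g A p : PL0 f -> inverse_on_I f g -> (forall t, inI t -> inI (g t)) ->
  orbital f A -> (forall x, A x -> p <= x) -> (forall y, p < y -> exists a, A a /\ a < y) ->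
  inI p /\ p < 1 /\ f p = p.
Proof.
  intros HP Hinv HgI HO Hlb Hglb.
  pose proof (PL_inc f HP) as Hi. pose proof (PL_mapI f HP) as HfI.
  pose proof HO as [[a0 Ha0] [Hc [HS _]]].
  destruct HP as [H0 [H1 _]].
  destruct (HS a0 Ha0) as [Ha0I Hfa0].
  assert (a0 < 1). { destruct (Req_dec a0 1) as [->|]; [contradiction|]. unfold inI in *; lra. }
  assert (Hp0 : 0 <= p).
  { apply Rnot_lt_le; intros Hlt. destruct (Hglb 0 Hlt) as [a [Ha Ha']].
    destruct (HS a Ha) as [[? ?] _]. lra. }
  pose proof (Hlb a0 Ha0).
  assert (HpI : inI p) by (unfold inI; lra).
  split; [exact HpI|]. split; [lra|].
  destruct (Req_dec (f p) p) as [E|E]; [exact E|exfalso].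
  assert (HAp : A p).
  { apply (extend f A HO a0 p a0 Ha0 ltac:(lra)); [|lra].
    intros y Hy. destruct (Req_dec y p) as [->|Hne]. split; assumption.
    apply HS. destruct (Hglb y ltac:(lra)) as [a [Ha Hay]].
    apply (Hc a a0 y Ha Ha0). lra. }
  assert (Hpos : 0 < p). { destruct (Req_dec p 0) as [->|]; [contradiction|lra]. }
  destruct (Hinv p HpI) as [_ Hfg]. pose proof (HgI p HpI) as HgpI.
  pose proof (HfI p HpI) as HfpI.
  destruct (Rtotal_order (f p) p) as [h|[h|h]]; [|contradiction|].
  - set (lo := (f p + p) / 2).
    assert (A lo).
    { apply (extend f A HO p lo p HAp ltac:(unfold lo; lra)); [|unfold lo; lra].
      intros y Hy. destruct (Req_dec y p) as [->|Hne]. split; assumption.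
      unfold inI in *. split. unfold inI; unfold lo in *; lra.
      assert (f y < f p) by (apply Hi; unfold inI, lo in *; lra). unfold lo in *; lra. }
    specialize (Hlb lo H3). unfold lo in Hlb; lra.
  - assert (Hgp : g p < p).
    { apply Rnot_le_lt; intros Hle. destruct (Rle_lt_or_eq_dec _ _ Hle) as [h2|h2].
      - assert (f p < f (g p)) by (apply Hi; auto). lra.
      - rewrite <- h2 in Hfg. lra. }
    set (lo := (g p + p) / 2).
    assert (A lo).
    { apply (extend f A HO p lo p HAp ltac:(unfold lo; lra)); [|unfold lo; lra].
      intros y Hy. destruct (Req_dec y p) as [->|Hne]. split; assumption.
      unfold inI in *. split. unfold inI; unfold lo in *; lra.
      assert (f (g p) < f y) by (apply Hi; unfold inI, lo in *; lra). unfold lo in *; lra. }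
    specialize (Hlb lo H3). unfold lo in Hlb; lra.
Qed.

Fixpoint itr (n : nat) (F : R -> R) (t : R) : R :=
  match n with O => t | S k => F (itr k F t) end.

Lemma iter_in (F : R -> R) (A : R -> Prop) : (forall x, A x -> A (F x)) ->
  forall n t, A t -> A (itr n F t).
Proof. intros HF n; induction n; intros t Ht; simpl; auto. Qed.

Lemma iter_reach (F G : R -> R) (A : R -> Prop) (p e : R) :
  (forall x, A x -> inI x) -> (forall x, A x -> p <= x) ->
  (forall y, p < y -> exists a, A a /\ a < y) -> convex A -> incI F ->
  (forall u, inI u -> F (G u) = u /\ inI (G u)) ->
  (forall x, A x -> A (F x)) -> (forall x, A x -> F x <> x) -> 0 < e ->
  forall t, A t -> F t < t -> exists n, itr n F t <= p + e.
Proof.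
  intros HAI Hlb Hglb Hc HF HG HFA Hfix He t Ht Hlt.
  apply NNPP; intros Hn.
  assert (Hall : forall n, p + e < itr n F t).
  { intros n. apply Rnot_le_lt. intros Hle. apply Hn. exists n; exact Hle. }
  destruct (glb_ex (fun y => exists n, y = itr n F t)) as [L [HL1 HL2]].
  - exists t, 0%nat; reflexivity.
  - exists p. intros x [n ->]. specialize (Hall n); lra.
  - assert (HLt : L <= t) by (apply HL1; exists 0%nat; reflexivity).
    assert (HLpe : p + e <= L).
    { apply Rnot_lt_le; intros Hlt2. destruct (HL2 _ Hlt2) as [x [[n ->] Hx]]. specialize (Hall n). lra. }
    assert (HAL : A L).
    { destruct (Hglb L ltac:(lra)) as [a [Ha Hal]]. apply (Hc a t L Ha Ht). pose proof (Hlb a Ha). lra. }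
    assert (HIL := HAI _ HAL).
    assert (HitI : forall n, inI (itr n F t)) by (intros n; apply HAI, iter_in; auto).
    destruct (Rtotal_order (F L) L) as [H|[H|H]].
    + destruct (HG L HIL) as [HFs HIs].
      assert (Hs : L < G L).
      { destruct (Rtotal_order L (G L)) as [H1|[H1|H1]]; auto.
        - rewrite <- H1 in HFs. lra.
        - assert (F (G L) < F L) by (apply HF; auto). lra. }
      destruct (HL2 _ Hs) as [x [[n ->] Hx]].
      assert (F (itr n F t) < F (G L)) by (apply HF; auto).
      assert (L <= itr (S n) F t) by (apply HL1; exists (S n); reflexivity).
      simpl in H1. lra.
    + exact (Hfix L HAL H).
    + assert (Hlbd : forall x, (exists n, x = itr n F t) -> F L <= x).
      { intros x [[|n] ->]; simpl.
        - pose proof (incI_le F L t HF HIL (HAI t Ht) HLt). lra.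
        - apply incI_le; auto. apply HL1. exists n; reflexivity. }
      destruct (HL2 (F L) H) as [x [Hx Hx2]]. specialize (Hlbd x Hx). lra.
Qed.

Lemma back (F G V W : R -> R) :
  (forall u, inI u -> G (F u) = u) -> (forall u, inI u -> inI (F u)) ->
  (forall u, inI u -> inI (V u)) -> (forall u, inI u -> inI (W u)) ->
  (forall u, inI u -> V (F u) = F (V u)) -> (forall u, inI u -> W (F u) = F (W u)) ->
  forall n t, inI t -> V (itr n F t) = W (itr n F t) -> V t = W t.
Proof.
  intros HGF HFI HVI HWI HV HW n. induction n as [|n IH]; intros t Ht H; [exact H|].
  simpl in H. apply IH; [exact Ht|].
  assert (Hu : inI (itr n F t)) by (apply iter_in; auto).
  rewrite <- (HGF (V _) (HVI _ Hu)), <- (HGF (W _) (HWI _ Hu)).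
  rewrite <- HV by exact Hu. rewrite <- HW by exact Hu. rewrite H. reflexivity.
Qed.

Lemma comm_of (a b ai bi : R -> R) :
  (forall u, inI u -> inI (a u)) -> (forall u, inI u -> inI (b u)) ->
  (forall u, inI u -> inI (ai u)) ->
  (forall u, inI u -> b (bi u) = u) -> (forall u, inI u -> a (ai u) = u) ->
  (forall t, inI t -> bi (ai (b (a t))) = t) -> forall t, inI t -> a (b t) = b (a t).
Proof.
  intros Ha Hb Hai Hbb Haa H t Ht.
  assert (K : b t = ai (b (a t))).
  { rewrite <- (H t Ht) at 1. apply Hbb. auto. }
  rewrite K. apply Haa. auto.
Qed.

Lemma comm_inv (F G V : R -> R) :
  (forall u, inI u -> G (F u) = u) -> (forall u, inI u -> F (G u) = u) ->
  (forall u, inI u -> inI (G u)) -> (forall u, inI u -> inI (V u)) ->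
  (forall u, inI u -> V (F u) = F (V u)) -> forall u, inI u -> V (G u) = G (V u).
Proof.
  intros HGF HFG HG HV H u Hu.
  rewrite <- (HGF (V (G u))) by auto. rewrite <- H by auto. rewrite HFG by auto. reflexivity.
Qed.

Theorem lemma2p2 (f0 f1 g0 g1 : R -> R) (A : R -> Prop) :
  PL0 f0 -> PL0 f1 ->
  inverse_on_I f0 g0 -> inverse_on_I f1 g1 ->
  eqI (commg (conjg f1 f0 g0) (rmul f0 g1) (conjg g1 f0 g0) (rmul f1 g0))
      (fun t => t) ->
  eqI (commg (rmul f0 g1) (conjg f1 (rmul f0 f0) (rmul g0 g0))
             (rmul f1 g0) (conjg g1 (rmul f0 f0) (rmul g0 g0)))
      (fun t => t) ->
  orbital f0 A -> orbital f1 A ->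
  forall t, A t -> rmul f0 f1 t = rmul f1 f0 t.
Proof.
  intros P0 P1 I0 I1 H1 H2 O0 O1.
  pose proof (PL_mapI f0 P0) as f0I. pose proof (PL_mapI f1 P1) as f1I.
  pose proof (inv_mapI f0 g0 P0 I0) as g0I. pose proof (inv_mapI f1 g1 P1 I1) as g1I.
  pose proof (PL_inc f0 P0) as i0. pose proof (PL_inc f1 P1) as i1.
  pose proof (inv_inc f0 g0 P0 I0) as j0. pose proof (inv_inc f1 g1 P1 I1) as j1.
  assert (g0f0 : forall t, inI t -> g0 (f0 t) = t) by (intros; apply I0; auto).
  assert (f0g0 : forall t, inI t -> f0 (g0 t) = t) by (intros; apply I0; auto).
  assert (g1f1 : forall t, inI t -> g1 (f1 t) = t) by (intros; apply I1; auto).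
  assert (f1g1 : forall t, inI t -> f1 (g1 t) = t) by (intros; apply I1; auto).
  pose proof (orbit_inv f0 g0 A O0 i0 f0I I0 g0I) as A0.
  pose proof (orbit_inv f1 g1 A O1 i1 f1I I1 g1I) as A1.
  pose proof O0 as [[a0 Ha0] [Hc [HS0 _]]].
  pose proof O1 as [_ [_ [HS1 _]]].
  assert (AI : forall x, A x -> inI x) by (intros x Hx; exact (proj1 (HS0 x Hx))).
  destruct (glb_ex A) as [p [Hlb Hglb]].
  { exists a0; exact Ha0. }
  { exists 0. intros x Hx. exact (proj1 (AI x Hx)). }
  destruct (endpoint f0 g0 A p P0 I0 g0I O0 Hlb Hglb) as [pI [p1 f0p]].
  destruct (endpoint f1 g1 A p P1 I1 g1I O1 Hlb Hglb) as [_ [_ f1p]].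
  destruct (PL_germ f0 p P0 ltac:(unfold inI in pI; lra) f0p) as [m0 G0].
  destruct (PL_germ f1 p P1 ltac:(unfold inI in pI; lra) f1p) as [m1 G1].
  pose proof (proj1 G0) as m0p. pose proof (proj1 G1) as m1p.
  pose proof (germ_inv p f0 g0 m0 G0 I0 (proj1 pI)) as G0'.
  pose proof (germ_inv p f1 g1 m1 G1 I1 (proj1 pI)) as G1'.
  set (V := fun u => g1 (f0 u)).
  set (W := fun u => g0 (g1 (f0 (f0 u)))).
  assert (GV : germ p V (m0 * / m1)) by (apply (germ_comp p f0 g1); auto).
  assert (GW : germ p W (m0 * m0 * / m1 * / m0)).
  { apply (germ_comp p (fun u => g1 (f0 (f0 u))) g0); auto.
    apply (germ_comp p (fun u => f0 (f0 u)) g1); auto.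
    apply (germ_comp p f0 f0); auto. }
  destruct (germ_eq p V W _ _ GV GW ltac:(field; lra)) as [d [Hd HVW]].
  set (E := fun u => f0 (f1 (g0 u))).
  set (Ei := fun u => f0 (g1 (g0 u))).
  assert (EI : forall u, inI u -> inI (E u)) by (intros; unfold E; auto).
  assert (EiI : forall u, inI u -> inI (Ei u)) by (intros; unfold Ei; auto).
  assert (VI : forall u, inI u -> inI (V u)) by (intros; unfold V; auto).
  assert (WI : forall u, inI u -> inI (W u)) by (intros; unfold W; auto).
  assert (EEi : forall u, inI u -> E (Ei u) = u).
  { intros u Hu; unfold E, Ei. rewrite g0f0 by auto. rewrite f1g1 by auto. auto. }
  assert (EiE : forall u, inI u -> Ei (E u) = u).
  { intros u Hu; unfold E, Ei. rewrite g0f0 by auto. rewrite g1f1 by auto. auto. }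
  assert (Einc : incI E).
  { apply (inc_comp (fun u => f1 (g0 u)) f0); auto. apply (inc_comp g0 f1); auto. }
  assert (Eiinc : incI Ei).
  { apply (inc_comp (fun u => g1 (g0 u)) f0); auto. apply (inc_comp g0 g1); auto. }
  assert (EA : forall x, A x -> A (E x)).
  { intros x Hx; unfold E. apply A0. apply A1. apply A0. exact Hx. }
  assert (EiA : forall x, A x -> A (Ei x)).
  { intros x Hx; unfold Ei. apply A0. apply A1. apply A0. exact Hx. }
  assert (Efix : forall x, A x -> E x <> x).
  { intros x Hx Heq. assert (Hg : A (g0 x)) by (apply A0; exact Hx).
    destruct (HS1 _ Hg) as [_ Hne]. apply Hne.
    apply (incI_inj f0); auto. unfold E in Heq. rewrite Heq, f0g0; auto. }
  assert (Eifix : forall x, A x -> Ei x <> x).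
  { intros x Hx Heq. apply (Efix x Hx). rewrite <- Heq at 1. apply EEi. auto. }
  assert (HC1 : forall t, inI t -> E (V t) = V (E t)).
  { apply (comm_of E V Ei (fun w => g0 (f1 w))); try solve [auto].
    all: first [ intros t Ht; exact (H1 t Ht) | intros u Hu; unfold V; rewrite f0g0 by auto; auto ]. }
  assert (HC2 : forall t, inI t -> V (f0 (f0 (f1 (g0 (g0 t))))) = f0 (f0 (f1 (g0 (g0 (V t)))))).
  { apply (comm_of V (fun u => f0 (f0 (f1 (g0 (g0 u))))) (fun w => g0 (f1 w))
           (fun w => f0 (f0 (g1 (g0 (g0 w)))))); try solve [auto].
    all: first [ intros t Ht; exact (H2 t Ht) | solve [intros; auto 10] | intros u Hu; unfold V; rewrite f0g0 by auto; auto
      | intros u Hu; rewrite g0f0 by auto; rewrite g0f0 by auto; rewrite f1g1 by auto;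
        rewrite f0g0 by auto; auto ]. }
  assert (HVE : forall u, inI u -> V (E u) = E (V u)) by (intros; symmetry; auto).
  assert (HWE : forall u, inI u -> W (E u) = E (W u)).
  { intros s Hs. pose proof (HC2 (f0 s) (f0I s Hs)) as K.
    rewrite g0f0 in K by auto. unfold W, E, V in *. rewrite K. rewrite g0f0 by auto. reflexivity. }
  assert (HVEi : forall u, inI u -> V (Ei u) = Ei (V u)) by (apply (comm_inv E); auto).
  assert (HWEi : forall u, inI u -> W (Ei u) = Ei (W u)) by (apply (comm_inv E); auto).
  assert (VW : forall t, A t -> V t = W t).
  { intros t Ht. destruct (Rtotal_order (E t) t) as [Hl|[Heq|Hg]].
    - destruct (iter_reach E Ei A p d AI Hlb Hglb Hc Einc ltac:(intros; split; auto)
                EA Efix Hd t Ht Hl) as [n Hn].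
      apply (back E Ei V W EiE EI VI WI HVE HWE n t (AI t Ht)).
      apply HVW. split; [apply Hlb, iter_in; auto | exact Hn].
    - exfalso; exact (Efix t Ht Heq).
    - assert (Hl : Ei t < t).
      { apply Rnot_le_lt; intros Hle. pose proof (incI_le E _ _ Einc (AI t Ht) (EiI t (AI t Ht)) Hle).
        rewrite EEi in H by auto. lra. }
      destruct (iter_reach Ei E A p d AI Hlb Hglb Hc Eiinc ltac:(intros; split; auto)
                EiA Eifix Hd t Ht Hl) as [n Hn].
      apply (back Ei E V W EEi EiI VI WI HVEi HWEi n t (AI t Ht)).
      apply HVW. split; [apply Hlb, iter_in; auto | exact Hn]. }
  intros s Hs. unfold rmul.
  assert (Ht : A (g0 (f1 s))) by (apply A0, A1; exact Hs).
  pose proof (VW _ Ht) as K. unfold V, W in K.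
  pose proof (AI s Hs) as sI.
  rewrite f0g0 in K by auto. rewrite g1f1 in K by auto.
  assert (K2 : f0 s = g1 (f0 (f1 s))).
  { rewrite K at 1. rewrite f0g0 by auto. reflexivity. }
  rewrite K2. rewrite f1g1 by auto. reflexivity.
Qed.
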